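(* Let $(L,\le,\bot,\top)$ be a complete lattice and $(\&_i,\swarrow^i,\nwarrow_i)$, $i=1,\dots,n$, adjoint triples on $L$ with $x\,\&_i\,\top=\top\,\&_i\,x=x$ for all $x\in L$ and all $i$. Let $(A,B,R,\sigma)$ be a normalized context with concept lattice $\mathcal{M}$, let $\{K_\mu\}_{\mu\in\Lambda}$ be a decomposition of $\mathcal{M}$ into independent blocks, and let $A_\mu,B_\mu$ ($\mu\in\Lambda$) be the associated sets defined below. If $a\in A$, $b\in B$ and $R(a,b)\neq\bot$, then there exists $\mu\in\Lambda$ such that $a\in A_\mu$ and $b\in B_\mu$.
   Context: An adjoint triple on $L$ is a triple of maps $\&,\swarrow,\nwarrow\colon L\times L\to L$ with $x\le z\swarrow y\iff x\& y\le z\iff y\le z\nwarrow x$. A context is $(A,B,R,\sigma)$ with $A,B$ non-empty, $R\colon A\times B\to L$, $\sigma\colon A\times B\to\{1,\dots,n\}$; normalized means every $a\in A$ has $b_1,b_2$ with $R(a,b_1)\ne\bot$, $R(a,b_2)=\bot$, and every $b\in B$ has $a_1,a_2$ with $R(a_1,b)\ne\bot$, $R(a_2,b)=\bot$. For $g\colon B\to L$, $f\colon A\to L$: $g^\uparrow(a)=\inf_{b}R(a,b)\swarrow^{\sigma(a,b)}g(b)$, $f^\downarrow(b)=\inf_{a}R(a,b)\nwarrow_{\sigma(a,b)}f(a)$. $\mathcal{M}$ is the complete lattice of pairs $\langle g,f\rangle$ with $g^\uparrow=f$, $f^\downarrow=g$, ordered by $g_1\le g_2$ pointwise; top $\langle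 g_\top,f_\bot\rangle$, bottom $\langle g_\bot,f_\top\rangle$ ($g_\top,g_\bot,f_\top,f_\bot$ constant maps). $\phi_{a,x}\colon A\to L$ takes value $x$ at $a$ and $\bot$ elsewhere; $\phi_{b,y}\colon B\to L$ takes value $y$ at $b$ and $\bot$ elsewhere. For a bounded lattice $(M,\preceq,\bot,\top)$, a block is a sublattice $K\subsetneq M$ with $K\setminus\{\bot,\top\}\ne\varnothing$ and $(\{x\mid k\preceq x\}\cup\{x\mid x\preceq k\})\setminus\{\bot,\top\}\subseteq K$ for all $k\in K\setminus\{\bot,\top\}$; blocks $K_1,K_2$ are independent if $K_1\cap K_2\subseteq\{\bot,\top\}$; a decomposition into independent blocks is a family of pairwise independent blocks whose union is $M$. With $K_\mu^*=K_\mu\setminus\{\langle g_\top,f_\bot\rangle,\langle g_\bot,f_\top\rangle\}$: $A_\mu=\{a\in A\mid\langle\phi_{a,x}^\downarrow,\phi_{a,x}^{\downarrow\uparrow}\rangle\in K_\mu^*\text{ for some }x\in L\}$ and $B_\mu=\{b\in B\mid\langle\phi_{b,y}^{\uparrow\downarrow},\phi_{b,y}^{\uparrow}\rangle\in K_\mu^*\text{ for some }y\in L\}$. *)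

(* Defs.v *)
From mathcomp Require Import all_boot.
From Stdlib Require Import ClassicalEpsilon.

Set Implicit Arguments.
Unset Strict Implicit.
Unset Printing Implicit Defensive.

Record complete_lattice (L : Type) := CompleteLattice {
  le : L -> L -> Prop;
  le_refl : forall x, le x x;
  le_trans : forall x y z, le x y -> le y z -> le x z;
  le_antisym : forall x y, le x y -> le y x -> x = y;
  inf : (L -> Prop) -> L;
  inf_lb : forall (S : L -> Prop) x, S x -> le (inf S) x;
  inf_glb : forall (S : L -> Prop) y, (forall x, S x -> le y x) -> le y (inf S)
}.

Section Concepts.
Variables (L : Type) (CL : complete_lattice L).

Definition bot : L := inf CL (fun _ => True).
Definition top : L := inf CL (fun _ => False).

(* (conj, sw, nw) = (&, ↙, ↖) with  x <= z ↙ y <-> x & y <= z <-> y <= z ↖ x *)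
Definition adjoint_triple (conj sw nw : L -> L -> L) : Prop :=
  forall x y z,
    (le CL x (sw z y) <-> le CL (conj x y) z) /\
    (le CL (conj x y) z <-> le CL y (nw z x)).

Variables (n : nat) (sw nw : 'I_n -> L -> L -> L).
Variables (A B : Type) (R : A -> B -> L) (sigma : A -> B -> 'I_n).

Definition normalized : Prop :=
  (forall a, (exists b1, R a b1 <> bot) /\ (exists b2, R a b2 = bot)) /\
  (forall b, (exists a1, R a1 b <> bot) /\ (exists a2, R a2 b = bot)).

Definition up (g : B -> L) : A -> L :=
  fun a => inf CL (fun z => exists b, z = sw (sigma a b) (R a b) (g b)).
Definition down (f : A -> L) : B -> L :=
  fun b => inf CL (fun z => exists a, z = nw (sigma a b) (R a b) (f a)).

Definition concept := ((B -> L) * (A -> L))%type.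

Definition is_concept (c : concept) : Prop := up c.1 = c.2 /\ down c.2 = c.1.

Definition leM (c1 c2 : concept) : Prop := forall b, le CL (c1.1 b) (c2.1 b).

Definition topM : concept := (fun _ => top, fun _ => bot).
Definition botM : concept := (fun _ => bot, fun _ => top).

Definition is_meetM (c1 c2 m : concept) : Prop :=
  is_concept m /\ leM m c1 /\ leM m c2 /\
  forall c, is_concept c -> leM c c1 -> leM c c2 -> leM c m.

Definition is_joinM (c1 c2 m : concept) : Prop :=
  is_concept m /\ leM c1 m /\ leM c2 m /\
  forall c, is_concept c -> leM c1 c -> leM c2 c -> leM m c.

Definition block (K : concept -> Prop) : Prop :=
  (forall c, K c -> is_concept c) /\
  (exists c, is_concept c /\ ~ K c) /\
  (forall c1 c2 m, K c1 -> K c2 -> is_meetM c1 c2 m -> K m) /\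
  (forall c1 c2 m, K c1 -> K c2 -> is_joinM c1 c2 m -> K m) /\
  (exists k, K k /\ k <> botM /\ k <> topM) /\
  (forall k x, K k -> k <> botM -> k <> topM ->
     is_concept x -> (leM k x \/ leM x k) -> x <> botM -> x <> topM -> K x).

Definition independent (K1 K2 : concept -> Prop) : Prop :=
  forall c, K1 c -> K2 c -> c = botM \/ c = topM.

Definition decomposition (Lam : Type) (K : Lam -> concept -> Prop) : Prop :=
  (forall mu, block (K mu)) /\
  (forall mu nu, mu <> nu -> independent (K mu) (K nu)) /\
  (forall c, is_concept c -> exists mu, K mu c).

Definition Kstar (K : concept -> Prop) (c : concept) : Prop :=
  K c /\ c <> topM /\ c <> botM.

Definition phiA (a : A) (x : L) : A -> L :=
  fun a' => if excluded_middle_informative (a' = a) then x else bot.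
Definition phiB (b : B) (y : L) : B -> L :=
  fun b' => if excluded_middle_informative (b' = b) then y else bot.

Definition A_mu (K : concept -> Prop) (a : A) : Prop :=
  exists x, Kstar K (down (phiA a x), up (down (phiA a x))).
Definition B_mu (K : concept -> Prop) (b : B) : Prop :=
  exists y, Kstar K (down (up (phiB b y)), up (phiB b y)).

End Concepts.

(* Main.v *)
Require Import Defs.
From mathcomp Require Import all_boot.
From Stdlib Require Import FunctionalExtensionality ClassicalEpsilon.

Section Helpers.
Variables (L : Type) (CL : complete_lattice L) (n : nat)
  (conj sw nw : 'I_n -> L -> L -> L).
Hypothesis Hadj : forall i, adjoint_triple CL (conj i) (sw i) (nw i).
Hypothesis Hunit : forall i x, conj i x (top CL) = x /\ conj i (top CL) x = x.
Variables (A B : Type) (R : A -> B -> L) (sigma : A -> B -> 'I_n).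

Lemma le_inf y S : le CL y (inf CL S) <-> forall x, S x -> le CL y x.
Proof.
  split.
  - intros H x Sx. eapply le_trans; [exact H| apply inf_lb; exact Sx].
  - intros H. apply inf_glb. exact H.
Qed.

Lemma bot_le x : le CL (bot CL) x.
Proof. unfold bot. apply inf_lb. exact I. Qed.

Lemma le_top x : le CL x (top CL).
Proof. unfold top. apply inf_glb. intros _ []. Qed.

Lemma conj_bot_l i y : conj i (bot CL) y = bot CL.
Proof.
  apply (@le_antisym _ CL); [|apply bot_le].
  apply (proj1 (proj1 (Hadj i (bot CL) y (bot CL)))). apply bot_le.
Qed.

Lemma conj_bot_r i x : conj i x (bot CL) = bot CL.
Proof.
  apply (@le_antisym _ CL); [|apply bot_le].
  apply (proj2 (proj2 (Hadj i x (bot CL) (bot CL)))). apply bot_le.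
Qed.

Lemma galois (g : B -> L) (f : A -> L) :
  (forall b, le CL (g b) (down CL nw R sigma f b)) <->
  (forall a, le CL (f a) (up CL sw R sigma g a)).
Proof.
  split.
  - intros H a. unfold up. apply le_inf. intros x [b ->].
    apply (proj1 (Hadj _ _ _ _)). apply (proj2 (Hadj _ _ _ _)).
    eapply le_trans; [apply H|]. apply inf_lb. exists a. reflexivity.
  - intros H b. unfold down. apply le_inf. intros x [a ->].
    apply (proj2 (Hadj _ _ _ _)). apply (proj1 (Hadj _ _ _ _)).
    eapply le_trans; [apply H|]. apply inf_lb. exists b. reflexivity.
Qed.

Lemma ge_up_down f a : le CL (f a) (up CL sw R sigma (down CL nw R sigma f) a).
Proof. revert a. apply galois. intro b. apply le_refl. Qed.

Lemma ge_down_up g b : le CL (g b) (down CL nw R sigma (up CL sw R sigma g) b).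
Proof. revert b. apply galois. intro a. apply le_refl. Qed.

Lemma down_anti f1 f2 : (forall a, le CL (f1 a) (f2 a)) ->
  forall b, le CL (down CL nw R sigma f2 b) (down CL nw R sigma f1 b).
Proof.
  intro H. apply galois. intro a. eapply le_trans; [apply H|]. apply ge_up_down.
Qed.

Lemma up_anti g1 g2 : (forall b, le CL (g1 b) (g2 b)) ->
  forall a, le CL (up CL sw R sigma g2 a) (up CL sw R sigma g1 a).
Proof.
  intro H. apply galois. intro b. eapply le_trans; [apply H|]. apply ge_down_up.
Qed.

Lemma dud f : down CL nw R sigma (up CL sw R sigma (down CL nw R sigma f)) = down CL nw R sigma f.
Proof.
  apply functional_extensionality. intro b. apply (@le_antisym _ CL).
  - apply down_anti. apply ge_up_down.
  - apply ge_down_up.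
Qed.

Lemma udu g : up CL sw R sigma (down CL nw R sigma (up CL sw R sigma g)) = up CL sw R sigma g.
Proof.
  apply functional_extensionality. intro a. apply (@le_antisym _ CL).
  - apply up_anti. apply ge_down_up.
  - apply ge_up_down.
Qed.

End Helpers.
Arguments conj_bot_l {L CL n conj sw nw} Hadj i y.
Arguments conj_bot_r {L CL n conj sw nw} Hadj i x.
Arguments galois {L CL n conj sw nw} Hadj {A B R sigma} g f.
Arguments ge_up_down {L CL n conj sw nw} Hadj {A B R sigma} f a.
Arguments ge_down_up {L CL n conj sw nw} Hadj {A B R sigma} g b.
Arguments down_anti {L CL n conj sw nw} Hadj {A B R sigma} f1 f2 _ b.
Arguments up_anti {L CL n conj sw nw} Hadj {A B R sigma} g1 g2 _ a.
Arguments dud {L CL n conj sw nw} Hadj {A B R sigma} f.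
Arguments udu {L CL n conj sw nw} Hadj {A B R sigma} g.
Arguments bot_le {L CL} x.
Arguments le_top {L CL} x.

Theorem lemma34 (L : Type) (CL : complete_lattice L) (n : nat)
    (conj sw nw : 'I_n -> L -> L -> L)
    (Hadj : forall i, adjoint_triple CL (conj i) (sw i) (nw i))
    (Hunit : forall i x, conj i x (top CL) = x /\ conj i (top CL) x = x)
    (A B : Type) (HA : inhabited A) (HB : inhabited B)
    (R : A -> B -> L) (sigma : A -> B -> 'I_n)
    (Hnorm : normalized CL R)
    (Lam : Type) (K : Lam -> concept L A B -> Prop)
    (Hdec : decomposition CL sw nw R sigma K)
    (a : A) (b : B) (Hab : R a b <> bot CL) :
  exists mu, A_mu CL sw nw R sigma (K mu) a /\ B_mu CL sw nw R sigma (K mu) b.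
Proof.
  destruct Hdec as [Hblk [_ Hcov]].
  destruct Hnorm as [HnA HnB].
  destruct (HnA a) as [[b1 Hb1] [b2 Hb2]].
  destruct (HnB b) as [[a1 Ha1] [a2 Ha2]].
  assert (nt : forall x, le CL (top CL) x -> x = bot CL -> False).
  { intros x Hx Hx0. subst x. apply Hab. apply (@le_antisym _ CL); [|apply bot_le].
    eapply le_trans; [apply le_top|exact Hx]. }
  set (ga := down CL nw R sigma (phiA CL a (top CL))).
  set (Ca := (ga, up CL sw R sigma ga) : concept L A B).
  set (gb := up CL sw R sigma (phiB CL b (top CL))).
  set (Cb := (down CL nw R sigma gb, gb) : concept L A B).
  set (fE := up CL sw R sigma (phiB CL b (R a b))).
  set (E := (down CL nw R sigma fE, fE) : concept L A B).
  assert (cCa : is_concept CL sw nw R sigma Ca).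
  { split; [reflexivity| apply (dud Hadj)]. }
  assert (cCb : is_concept CL sw nw R sigma Cb).
  { split; [apply (udu Hadj)| reflexivity]. }
  assert (cE : is_concept CL sw nw R sigma E).
  { split; [apply (udu Hadj)| reflexivity]. }
  assert (ga_le : forall b', le CL (ga b') (R a b')).
  { intro b'. unfold ga, down. eapply le_trans; [apply inf_lb; exists a; reflexivity|].
    unfold phiA. destruct (excluded_middle_informative (a = a)) as [eq0|C]; cbv beta iota delta [is_left]; [|now destruct C].
    rewrite <- (proj2 (Hunit (sigma a b') (nw (sigma a b') (R a b') (top CL)))).
    apply (proj2 (Hadj _ _ _ _)). apply le_refl. }
  assert (ga_ge : forall b', le CL (R a b') (ga b')).
  { intro b'. unfold ga, down. apply le_inf. intros x [a' ->].
    apply (proj2 (Hadj _ _ _ _)). unfold phiA.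
    destruct (excluded_middle_informative (a' = a)) as [->|neq0]; cbv beta iota delta [is_left].
    - rewrite (proj2 (Hunit _ _)). apply le_refl.
    - rewrite (conj_bot_l Hadj). apply bot_le. }
  assert (gb_le : forall a', le CL (gb a') (R a' b)).
  { intro a'. unfold gb, up. eapply le_trans; [apply inf_lb; exists b; reflexivity|].
    unfold phiB. destruct (excluded_middle_informative (b = b)) as [eq0|C]; cbv beta iota delta [is_left]; [|now destruct C].
    rewrite <- (proj1 (Hunit (sigma a' b) (sw (sigma a' b) (R a' b) (top CL)))).
    apply (proj1 (Hadj _ _ _ _)). apply le_refl. }
  assert (gb_ge : forall a', le CL (R a' b) (gb a')).
  { intro a'. unfold gb, up. apply le_inf. intros x [b' ->].
    apply (proj1 (Hadj _ _ _ _)). unfold phiB.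
    destruct (excluded_middle_informative (b' = b)) as [->|neq0]; cbv beta iota delta [is_left].
    - rewrite (proj1 (Hunit _ _)). apply le_refl.
    - rewrite (conj_bot_r Hadj). apply bot_le. }
  assert (Ca_top : Ca <> topM CL A B).
  { intro H. apply (f_equal fst) in H. simpl in H.
    apply (nt (R a b2)); [|exact Hb2]. change (top CL) with ((fun _ : B => top CL) b2). rewrite <- H. apply ga_le. }
  assert (Ca_bot : Ca <> botM CL A B).
  { intro H. apply (f_equal fst) in H. simpl in H. apply Hb1.
    apply (@le_antisym _ CL); [|apply bot_le].
    change (bot CL) with ((fun _ : B => bot CL) b1). rewrite <- H. apply ga_ge. }
  assert (Cb_top : Cb <> topM CL A B).
  { intro H. apply (f_equal snd) in H. simpl in H. apply Ha1.
    apply (@le_antisym _ CL); [|apply bot_le].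
    change (bot CL) with ((fun _ : A => bot CL) a1). rewrite <- H. apply gb_ge. }
  assert (Cb_bot : Cb <> botM CL A B).
  { intro H. apply (f_equal snd) in H. simpl in H.
    apply (nt (R a2 b)); [|exact Ha2].
    change (top CL) with ((fun _ : A => top CL) a2). rewrite <- H. apply gb_le. }
  assert (ECa : leM CL E Ca).
  { intro b'. simpl. unfold ga.
    revert b'. apply (galois Hadj). intro a'.
    eapply le_trans; [|apply (ge_up_down Hadj)].
    unfold phiA. destruct (excluded_middle_informative (a' = a)) as [->|neq0]; cbv beta iota delta [is_left]; [|apply bot_le].
    unfold fE, up. apply le_inf. intros x [b' ->].
    apply (proj1 (Hadj _ _ _ _)). unfold phiB.
    destruct (excluded_middle_informative (b' = b)) as [->|neq0]; cbv beta iota delta [is_left].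
    - rewrite (proj2 (Hunit _ _)). apply le_refl.
    - rewrite (conj_bot_r Hadj). apply bot_le. }
  assert (ECb : leM CL E Cb).
  { intro b'. simpl. revert b'. apply (down_anti Hadj).
    apply (up_anti Hadj). intro b'. unfold phiB.
    destruct (excluded_middle_informative (b' = b)); cbv beta iota delta [is_left]; [apply le_top|apply le_refl]. }
  assert (E_bot : E <> botM CL A B).
  { intro H. apply (f_equal fst) in H. simpl in H. apply Hab.
    apply (@le_antisym _ CL); [|apply bot_le].
    change (bot CL) with ((fun _ : B => bot CL) b). rewrite <- H.
    eapply le_trans; [|apply (ge_down_up Hadj)].
    unfold phiB. destruct (excluded_middle_informative (b = b)) as [eq0|C]; cbv beta iota delta [is_left]; [apply le_refl|now destruct C]. }
  assert (E_top : E <> topM CL A B).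
  { intro H. apply (nt (R a b2)); [|exact Hb2].
    eapply le_trans; [|apply (ga_le b2)].
    specialize (ECa b2). rewrite H in ECa. exact ECa. }
  destruct (Hcov E cE) as [mu HE].
  exists mu.
  destruct (Hblk mu) as [_ [_ [_ [_ [_ Hcl]]]]].
  split.
  - exists (top CL). split; [|split; [exact Ca_top|exact Ca_bot]].
    exact (Hcl E Ca HE E_bot E_top cCa (or_introl ECa) Ca_bot Ca_top).
  - exists (top CL). split; [|split; [exact Cb_top|exact Cb_bot]].
    exact (Hcl E Cb HE E_bot E_top cCb (or_introl ECb) Cb_bot Cb_top).
Qed.
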